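(* Let $\varepsilon\in\{0,-1\}$, $\delta\in\{-1,0,1\}$ and $\phi_1,\phi_2,\phi_3\in\mathring I_\delta$. Then $$\mathcal{M}_{\varepsilon,\delta}(\phi_1,\phi_2,\phi_3)=\{(r_1,r_2,r_3)\in(J_{\varepsilon\delta})^3:\ (r_i,r_j)\in\mathcal{D}_{\varepsilon,\delta}(\phi_k)\text{ for all }\{i,j,k\}=\{1,2,3\}\}.$$
   Context: Generalized hyperbolic triangles (in $\mathbb{H}^2$) are convex regions bounded by three geodesics $L_1,L_2,L_3$ (forming a Euclidean triangle in the Klein model) truncated by common perpendiculars at vertices outside $\overline{\mathbb{H}^2}$, with horodisks at ideal vertices; a generalized vertex has type $1$ (in $\mathbb{H}^2$), $0$ (ideal) or $-1$ (hyperideal). Generalized angle: interior angle (type 1), twice the horocyclic arc length between the sides (type 0), distance between the two sides (type $-1$). Generalized edge length between generalized vertices $u,v$: with $B_u$ the point, the horodisk, or the half-plane beyond the truncating perpendicular, it is $d(B_u,B_v)$ if these are disjoint and minus the distance between the points where $\partial B_u,\partial B_v$ meet the side otherwise. Type $(-1,-1,-1)$ triangles are right-angled hexagons, type $(0,0,0)$ are decorated ideal triangles. $\mathring I_\delta=\mathbb{R}_{>0}$ for $\delta\in\{0,-1\}$, $(0,\pi)$ for $\delta=1$; $J_\sigma=\mathbb{R}_{>0}$ for $\sigma=\pm1$, $J_0=\mathbb{R}$. For $\theta\in\mathring I_\delta$, $\mathcal{D}_{\varepsilon,\delta}(\theta)$ is the set of $(a,b)\in(J_{\varepsilon\delta})^2$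 such that there is a generalized triangle of type $(\varepsilon,\varepsilon,\delta)$ whose two sides at the type-$\delta$ vertex have lengths $a,b$ and whose generalized angle there is $\theta$. For $(r_i,r_j)\in\mathcal{D}_{\varepsilon,\delta}(\phi_k)$ let $l_k$ be the generalized length of the third side of this (unique up to isometry) triangle. Then $\mathcal{M}_{\varepsilon,\delta}(\phi_1,\phi_2,\phi_3)$ is the set of $(r_1,r_2,r_3)\in(J_{\varepsilon\delta})^3$ such that, for each $\{i,j,k\}=\{1,2,3\}$, $l_k$ is defined, and there exists a generalized triangle of type $(\varepsilon,\varepsilon,\varepsilon)$ with edge lengths $l_1,l_2,l_3$. *)

(* Defs.v *)
From Stdlib Require Import Reals ZArith.
Open Scope R_scope.

(** * Hyperboloid model of H^2 in Minkowski space R^{2,1}.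
    The Klein model is the affine chart x3 = 1 of the same projective
    picture: a vector v with c3 v > 0 corresponds to the Klein point
    (c1 v / c3 v, c2 v / c3 v). *)

Record V3 := mkV { c1 : R; c2 : R; c3 : R }.

Definition mink (u v : V3) : R := c1 u * c1 v + c2 u * c2 v - c3 u * c3 v.

Definition lin (a : R) (u : V3) (b : R) (v : V3) : V3 :=
  mkV (a * c1 u + b * c1 v) (a * c2 u + b * c2 v) (a * c3 u + b * c3 v).

Definition det3 (u v w : V3) : R :=
  c1 u * (c2 v * c3 w - c3 v * c2 w)
  - c2 u * (c1 v * c3 w - c3 v * c1 w)
  + c3 u * (c1 v * c2 w - c2 v * c1 w).

Definition H2 (x : V3) : Prop := mink x x = -1 /\ 0 < c3 x.

Definition arcosh (z : R) : R := ln (z + sqrt (z * z - 1)).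

Definition hdist (x y : V3) : R := arcosh (- mink x y).

Definition is_inf (P : R -> Prop) (m : R) : Prop :=
  (forall d, P d -> m <= d) /\ (forall m', (forall d, P d -> m' <= d) -> m' <= m).

Definition setdist (A B : V3 -> Prop) (d : R) : Prop :=
  is_inf (fun t => exists x y, A x /\ B y /\ t = hdist x y) d.

(** Types are integers 1, 0, -1.
    - type 1  : v is a point of H^2;
    - type 0  : v is a future light-like vector; it encodes the ideal point
                [v] together with the horodisk {x | -<x,v> <= 1} centred at it
                (this is a bijection with (ideal point, horodisk) pairs);
    - type -1 : v is a unit space-like vector with c3 v > 0, i.e. a (finite)
                Klein point outside the closed disk; its truncating geodesic
                (polar) is {x | <x,v> = 0}. *)
Definition gvertex (t : Z) (v : V3) : Prop :=
  match t with
  | Z0 => mink v v = 0 /\ 0 < c3 v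
  | Zpos _ => H2 v
  | Zneg _ => mink v v = 1 /\ 0 < c3 v
  end.

(** B_v : the point, the horodisk, or the closed half-plane beyond the
    truncating perpendicular (the side containing the hyperideal vertex). *)
Definition Bset (t : Z) (v : V3) (x : V3) : Prop :=
  match t with
  | Z0 => H2 x /\ - mink x v <= 1
  | Zpos _ => x = v
  | Zneg _ => H2 x /\ 0 <= mink x v
  end.

Definition Bbdry (t : Z) (v : V3) (x : V3) : Prop :=
  match t with
  | Z0 => H2 x /\ - mink x v = 1
  | Zpos _ => x = v
  | Zneg _ => H2 x /\ mink x v = 0
  end.

Definition geod (u v : V3) (x : V3) : Prop :=
  H2 x /\ exists a b, x = lin a u b v.

(** the part of H^2 cut away by the truncation at a hyperideal vertex *)
Definition cut (t : Z) (v : V3) (x : V3) : Prop :=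
  match t with
  | Zneg _ => 0 <= mink x v
  | _ => False
  end.

(** the side between vertices u, v of the Euclidean (Klein) triangle keeps a
    nonempty piece of H^2 after truncation *)
Definition side_ok (tu : Z) (u : V3) (tv : Z) (v : V3) : Prop :=
  exists a b, 0 <= a /\ 0 <= b /\
    H2 (lin a u b v) /\ ~ cut tu u (lin a u b v) /\ ~ cut tv v (lin a u b v).

(** generalized hyperbolic triangle of type (t1,t2,t3) with generalized
    vertices v1, v2, v3: the three Klein vertices form a nondegenerate
    Euclidean triangle, each side is a geodesic meeting the truncated region. *)
Definition gtri (t1 t2 t3 : Z) (v1 v2 v3 : V3) : Prop :=
  gvertex t1 v1 /\ gvertex t2 v2 /\ gvertex t3 v3 /\
  det3 v1 v2 v3 <> 0 /\
  side_ok t1 v1 t2 v2 /\ side_ok t2 v2 t3 v3 /\ side_ok t3 v3 t1 v1.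

Definition glen (tu : Z) (u : V3) (tv : Z) (v : V3) (l : R) : Prop :=
  ((forall x, ~ (Bset tu u x /\ Bset tv v x)) /\ setdist (Bset tu u) (Bset tv v) l)
  \/
  ((exists x, Bset tu u x /\ Bset tv v x) /\
   exists p q, Bbdry tu u p /\ geod u v p /\ Bbdry tv v q /\ geod u v q /\
               l = - hdist p q).

(** generalized angle at vertex w (type tw) between the sides towards u and v.
    - type 1: Riemannian angle between the tangent vectors at w of the sides;
    - type 0: twice the horocyclic arc length between the points p, q where the
      sides meet the horocycle; the horocycle through p is parametrised by
      arc length as s |-> p + s T + (s^2/2) w (T unit, T ⊥ p, T ⊥ w);
    - type -1: distance between the two sides. *)
Definition gangle (tw : Z) (w u v : V3) (theta : R) : Prop :=
  match tw with
  | Zpos _ =>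
      let Tu := lin 1 u (mink u w) w in
      let Tv := lin 1 v (mink v w) w in
      0 <= theta <= PI /\
      cos theta = mink Tu Tv / (sqrt (mink Tu Tu) * sqrt (mink Tv Tv))
  | Z0 =>
      exists p q T s,
        Bbdry 0 w p /\ geod w u p /\ Bbdry 0 w q /\ geod w v q /\
        mink T T = 1 /\ mink T p = 0 /\ mink T w = 0 /\
        q = lin 1 (lin 1 p s T) (s * s / 2) w /\
        theta = 2 * Rabs s
  | Zneg _ => setdist (geod w u) (geod w v) theta
  end.

Definition Iint (delta : Z) (theta : R) : Prop :=
  match delta with
  | Zpos _ => 0 < theta < PI
  | _ => 0 < theta
  end.

Definition J (sigma : Z) (x : R) : Prop :=
  match sigma with
  | Z0 => True
  | _ => 0 < x
  end.

(** a triangle of type (eps,eps,delta) (vertices v1, v2 of type eps, v3 of type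
    delta) with sides a = |v3 v1|, b = |v3 v2|, angle theta at v3 and
    third side l = |v1 v2| *)
Definition realizes (eps delta : Z) (theta a b l : R) : Prop :=
  exists v1 v2 v3, gtri eps eps delta v1 v2 v3 /\
    glen delta v3 eps v1 a /\ glen delta v3 eps v2 b /\
    gangle delta v3 v1 v2 theta /\ glen eps v1 eps v2 l.

Definition Dset (eps delta : Z) (theta a b : R) : Prop :=
  J (eps * delta) a /\ J (eps * delta) b /\
  exists v1 v2 v3, gtri eps eps delta v1 v2 v3 /\
    glen delta v3 eps v1 a /\ glen delta v3 eps v2 b /\
    gangle delta v3 v1 v2 theta.

(** M_{eps,delta}(phi1,phi2,phi3): l_k is the third side of the triangle
    determined by (r_i, r_j) in D(phi_k), for each ordering of {i,j,k};
    and a triangle of type (eps,eps,eps) with lengths l1,l2,l3 exists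
    (l_k is the length of the side opposite vertex k). *)
Definition Mset (eps delta : Z) (phi1 phi2 phi3 r1 r2 r3 : R) : Prop :=
  J (eps * delta) r1 /\ J (eps * delta) r2 /\ J (eps * delta) r3 /\
  exists l1 l2 l3,
    realizes eps delta phi1 r2 r3 l1 /\ realizes eps delta phi1 r3 r2 l1 /\
    realizes eps delta phi2 r3 r1 l2 /\ realizes eps delta phi2 r1 r3 l2 /\
    realizes eps delta phi3 r1 r2 l3 /\ realizes eps delta phi3 r2 r1 l3 /\
    exists w1 w2 w3, gtri eps eps eps w1 w2 w3 /\
      glen eps w2 eps w3 l1 /\ glen eps w3 eps w1 l2 /\ glen eps w1 eps w2 l3.

(* Main.v *)
Require Import Defs.
From Stdlib Require Import Reals ZArith Lra Psatz.
Open Scope R_scope.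

Lemma mink_sym u v : mink u v = mink v u.
Proof. destruct u, v; unfold mink; simpl; ring. Qed.
Lemma mink_linl a u b v w : mink (lin a u b v) w = a * mink u w + b * mink v w.
Proof. destruct u, v, w; unfold mink, lin; simpl; ring. Qed.
Lemma mink_linr a u b v w : mink w (lin a u b v) = a * mink w u + b * mink w v.
Proof. destruct u, v, w; unfold mink, lin; simpl; ring. Qed.
Lemma c3_lin a u b v : c3 (lin a u b v) = a * c3 u + b * c3 v.
Proof. reflexivity. Qed.

Lemma future_neg a b : mink a a < 0 -> mink b b < 0 -> 0 < c3 a -> 0 < c3 b -> mink a b < 0.
Proof.
  destruct a as [a1 a2 a3], b as [b1 b2 b3]; unfold mink; simpl; intros Ha Hb Pa Pb.
  assert (H1 : (a1*b1+a2*b2)^2 <= (a1*a1+a2*a2)*(b1*b1+b2*b2)) by (pose proof (pow2_ge_0 (a1*b2-a2*b1)); nra).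
  assert (H2 : (a1*a1+a2*a2)*(b1*b1+b2*b2) < (a3*a3)*(b3*b3)).
  { apply Rle_lt_trans with ((a1*a1+a2*a2)*(b3*b3)). apply Rmult_le_compat_l; nra. apply Rmult_lt_compat_r; nra. }
  assert (0 < a3*b3) by nra.
  destruct (Rlt_or_le (a1*b1+a2*b2-a3*b3) 0); [lra|].
  assert ((a3*b3)^2 <= (a1*b1+a2*b2)^2) by (apply pow_incr; lra).
  nra.
Qed.

Lemma rev_cs a b : mink b b < 0 -> mink a a * mink b b <= (mink a b)^2.
Proof.
  intro Hb.
  assert (Hc : c3 b <> 0).
  { intro E. destruct b as [b1 b2 b3]; unfold mink in Hb; simpl in *; subst; nra. }
  set (t := - c3 a / c3 b).
  set (w := lin 1 a t b).
  assert (Hw : 0 <= mink w w).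
  { assert (c3 w = 0). { unfold w; rewrite c3_lin; unfold t; field; auto. }
    destruct w as [w1 w2 w3]; unfold mink; simpl in *; subst; nra. }
  unfold w in Hw; rewrite mink_linl, !mink_linr in Hw.
  rewrite (mink_sym b a) in Hw.
  pose proof (pow2_ge_0 (mink a b + t * mink b b)).
  assert (mink b b * (1 * (1 * mink a a + t * mink a b) + t * (1 * mink a b + t * mink b b)) <= 0) by nra.
  nra.
Qed.

Lemma future_of a b : mink a a < 0 -> mink b b < 0 -> 0 < c3 b -> mink a b < 0 -> 0 < c3 a.
Proof.
  intros Ha Hb Pb Hab.
  destruct (Rtotal_order (c3 a) 0) as [L|[E|G]]; auto.
  - assert (mink (lin (-1) a 0 a) b < 0).
    { apply future_neg; auto. rewrite mink_linl, !mink_linr. nra. rewrite c3_lin; lra. }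
    rewrite mink_linl in H. lra.
  - destruct a as [a1 a2 a3]; unfold mink in Ha; simpl in *; subst; nra.
Qed.

Lemma sqrt_le_of_sq a b : 0 <= a -> 0 <= b -> a <= b^2 -> sqrt a <= b.
Proof.
  intros Ha Hb H. rewrite <- (sqrt_pow2 b Hb). apply sqrt_le_1_alt. exact H.
Qed.

Lemma frame_ineq e f x y : mink e e = -1 -> mink f f = 1 -> mink e f = 0 -> 0 < c3 e -> H2 x -> H2 y ->
  sqrt (1 + (mink x f)^2) <= - mink x e /\
  sqrt (1 + (mink x f)^2) * sqrt (1 + (mink y f)^2) - mink x f * mink y f <= - mink x y.
Proof.
  intros Hee Hff Hef He [Hx Px] [Hy Py].
  set (X1 := mink x f). set (Y1 := mink y f).
  set (x' := lin 1 x (-X1) f). set (y' := lin 1 y (-Y1) f).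
  assert (Hxe : mink x e < 0) by (apply future_neg; lra).
  assert (Hx'x' : mink x' x' = -1 - X1^2).
  { unfold x'; rewrite mink_linl, !mink_linr, (mink_sym f x). fold X1. rewrite Hx, Hff. ring. }
  assert (Hy'y' : mink y' y' = -1 - Y1^2).
  { unfold y'; rewrite mink_linl, !mink_linr, (mink_sym f y). fold Y1. rewrite Hy, Hff. ring. }
  assert (Hx'e : mink x' e = mink x e).
  { unfold x'; rewrite mink_linl, (mink_sym f e), Hef. ring. }
  assert (Hy'e : mink y' e = mink y e).
  { unfold y'; rewrite mink_linl, (mink_sym f e), Hef. ring. }
  assert (Hye : mink y e < 0) by (apply future_neg; lra).
  assert (Px' : 0 < c3 x') by (apply (future_of x' e); nra).
  assert (Py' : 0 < c3 y') by (apply (future_of y' e); nra).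
  assert (Hx'y' : mink x' y' = mink x y - X1 * Y1).
  { unfold x', y'; rewrite mink_linl, !mink_linr, (mink_sym f y). fold X1 Y1. rewrite Hff. ring. }
  assert (Nxy : mink x' y' < 0) by (apply future_neg; nra).
  split.
  - pose proof (rev_cs x' e ltac:(lra)) as R. rewrite Hx'x', Hee, Hx'e in R.
    apply sqrt_le_of_sq; nra.
  - pose proof (rev_cs x' y' ltac:(nra)) as R. rewrite Hx'x', Hy'y', Hx'y' in R.
    rewrite <- sqrt_mult by nra.
    assert (sqrt ((1 + X1^2) * (1 + Y1^2)) <= - (mink x y - X1*Y1)).
    { apply sqrt_le_of_sq; nra. }
    lra.
Qed.

Lemma sq_ge_pos a b : 0 <= a -> 0 <= b -> a^2 <= b^2 -> a <= b.
Proof. intros. destruct (Rle_or_lt a b); auto. nra. Qed.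

Lemma half_ineq u v x y : mink u u = 1 -> mink v v = 1 -> 0 < c3 u -> 0 < c3 v -> mink u v < -1 ->
  H2 x -> H2 y -> 0 <= mink x u -> 0 <= mink y v -> - mink u v <= - mink x y.
Proof.
  intros Hu Hv Pu Pv Hm Hx Hy Hxu Hyv.
  set (m := mink u v) in *.
  set (k1 := sqrt (-2-2*m)). set (k2 := sqrt (2-2*m)).
  assert (K1 : k1*k1 = -2-2*m) by (apply sqrt_sqrt; lra).
  assert (K2 : k2*k2 = 2-2*m) by (apply sqrt_sqrt; lra).
  assert (k1p : 0 < k1) by (apply sqrt_lt_R0; lra).
  assert (k2p : 0 < k2) by (apply sqrt_lt_R0; lra).
  set (e := lin (/k1) u (/k1) v). set (f := lin (/k2) u (-/k2) v).
  assert (Hvu : mink v u = m) by (unfold m; apply mink_sym).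
  assert (Hee : mink e e = -1).
  { unfold e; rewrite mink_linl, !mink_linr, Hu, Hv, Hvu; fold m.
    replace (/ k1 * (/ k1 * 1 + / k1 * m) + / k1 * (/ k1 * m + / k1 * 1)) with ((2+2*m)/(k1*k1)) by (field; lra).
    rewrite K1. field. lra. }
  assert (Hff : mink f f = 1).
  { unfold f; rewrite mink_linl, !mink_linr, Hu, Hv, Hvu; fold m.
    replace (/ k2 * (/ k2 * 1 + - / k2 * m) + - / k2 * (/ k2 * m + - / k2 * 1)) with ((2-2*m)/(k2*k2)) by (field; lra).
    rewrite K2. field. lra. }
  assert (Hef : mink e f = 0).
  { unfold e, f; rewrite mink_linl, !mink_linr, Hu, Hv, Hvu; fold m. field. split; lra. }
  assert (Pe : 0 < c3 e).
  { unfold e; rewrite c3_lin. assert (0 < /k1) by (apply Rinv_0_lt_compat; lra). nra. }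
  destruct (frame_ineq e f x y Hee Hff Hef Pe Hx Hy) as [Ix Ixy].
  destruct (frame_ineq e f y x Hee Hff Hef Pe Hy Hx) as [Iy _].
  set (X1 := mink x f) in *. set (Y1 := mink y f) in *.
  set (A := sqrt (1 + X1^2)) in *. set (B := sqrt (1 + Y1^2)) in *.
  assert (A0 : 0 <= A) by apply sqrt_pos.
  assert (B0 : 0 <= B) by apply sqrt_pos.
  assert (A2 : A*A = 1 + X1^2) by (apply sqrt_sqrt; nra).
  assert (B2 : B*B = 1 + Y1^2) by (apply sqrt_sqrt; nra).
  assert (EX0 : k1 * mink x e = mink x u + mink x v).
  { unfold e; rewrite mink_linr. field; lra. }
  assert (EX1 : k2 * X1 = mink x u - mink x v).
  { unfold X1, f; rewrite mink_linr. field; lra. }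
  assert (EY0 : k1 * mink y e = mink y u + mink y v).
  { unfold e; rewrite mink_linr. field; lra. }
  assert (EY1 : k2 * Y1 = mink y u - mink y v).
  { unfold Y1, f; rewrite mink_linr. field; lra. }
  assert (SX : k1 * A <= k2 * X1) by nra.
  assert (SY : k1 * B <= - k2 * Y1) by nra.
  assert (X1p : 0 <= X1) by nra.
  assert (Y1n : Y1 <= 0) by nra.
  assert (QX : (k1*A)^2 <= (k2*X1)^2) by (apply pow_incr; nra).
  assert (QY : (k1*B)^2 <= (-k2*Y1)^2) by (apply pow_incr; nra).
  assert (X1b : k1/2 <= X1).
  { apply sq_ge_pos; try lra. nra. }
  assert (Y1b : k1/2 <= -Y1).
  { apply sq_ge_pos; try lra. nra. }
  assert (Ab : k2/2 <= A) by (apply sq_ge_pos; nra).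
  assert (Bb : k2/2 <= B) by (apply sq_ge_pos; nra).
  assert (k2/2 * (k2/2) <= A * B) by (apply Rmult_le_compat; lra).
  assert (k1/2 * (k1/2) <= X1 * - Y1) by (apply Rmult_le_compat; lra).
  nra.
Qed.

Lemma horo_ineq u v x y : mink u u = 0 -> mink v v = 0 -> 0 < c3 u -> 0 < c3 v -> 2 < - mink u v ->
  H2 x -> H2 y -> - mink x u <= 1 -> - mink y v <= 1 -> - mink u v / 4 + / (- mink u v) <= - mink x y.
Proof.
  intros Hu Hv Pu Pv Hm Hx Hy Hxu Hyv.
  set (c := - mink u v) in *.
  assert (Hvu : mink v u = - c) by (unfold c; rewrite mink_sym; ring).
  assert (Huv : mink u v = - c) by (unfold c; ring).
  set (k := sqrt (2*c)).
  assert (K : k*k = 2*c) by (apply sqrt_sqrt; lra).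
  assert (kp : 0 < k) by (apply sqrt_lt_R0; lra).
  set (e := lin (/k) u (/k) v). set (f := lin (/k) u (-/k) v).
  assert (Hee : mink e e = -1).
  { unfold e; rewrite mink_linl, !mink_linr, Hu, Hv, Hvu, Huv.
    replace (/ k * (/ k * 0 + / k * - c) + / k * (/ k * - c + / k * 0)) with (-(2*c)/(k*k)) by (field; lra).
    rewrite K. field. lra. }
  assert (Hff : mink f f = 1).
  { unfold f; rewrite mink_linl, !mink_linr, Hu, Hv, Hvu, Huv.
    replace (/ k * (/ k * 0 + - / k * - c) + - / k * (/ k * - c + - / k * 0)) with ((2*c)/(k*k)) by (field; lra).
    rewrite K. field. lra. }
  assert (Hef : mink e f = 0).
  { unfold e, f; rewrite mink_linl, !mink_linr, Hu, Hv, Hvu, Huv. field. lra. }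
  assert (Pe : 0 < c3 e).
  { unfold e; rewrite c3_lin. assert (0 < /k) by (apply Rinv_0_lt_compat; lra). nra. }
  destruct (frame_ineq e f x y Hee Hff Hef Pe Hx Hy) as [Ix Ixy].
  destruct (frame_ineq e f y x Hee Hff Hef Pe Hy Hx) as [Iy _].
  set (X1 := mink x f) in *. set (Y1 := mink y f) in *.
  set (A := sqrt (1 + X1^2)) in *. set (B := sqrt (1 + Y1^2)) in *.
  assert (A0 : 0 <= A) by apply sqrt_pos.
  assert (B0 : 0 <= B) by apply sqrt_pos.
  assert (A2 : A*A = 1 + X1^2) by (apply sqrt_sqrt; nra).
  assert (B2 : B*B = 1 + Y1^2) by (apply sqrt_sqrt; nra).
  assert (EX0 : k * mink x e = mink x u + mink x v).
  { unfold e; rewrite mink_linr. field; lra. }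
  assert (EX1 : k * X1 = mink x u - mink x v).
  { unfold X1, f; rewrite mink_linr. field; lra. }
  assert (EY0 : k * mink y e = mink y u + mink y v).
  { unfold e; rewrite mink_linr. field; lra. }
  assert (EY1 : k * Y1 = mink y u - mink y v).
  { unfold Y1, f; rewrite mink_linr. field; lra. }
  set (P := A + X1). set (P' := A - X1). set (Q := B - Y1). set (Q' := B + Y1).
  assert (PP : P * P' = 1) by (unfold P, P'; nra).
  assert (QQ : Q * Q' = 1) by (unfold Q, Q'; nra).
  assert (Pp : 0 < P).
  { unfold P. destruct (Rle_or_lt 0 X1). nra. assert (X1*X1 < A*A) by nra. nra. }
  assert (Qp : 0 < Q).
  { unfold Q. destruct (Rle_or_lt Y1 0). nra. assert (Y1*Y1 < B*B) by nra. nra. }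
  assert (P'b : k * P' <= 2) by (unfold P'; nra).
  assert (Q'b : k * Q' <= 2) by (unfold Q'; nra).
  assert (Pb : k <= 2 * P) by nra.
  assert (Qb : k <= 2 * Q) by nra.
  assert (HEq : A*B - X1*Y1 = (P*Q + P'*Q')/2) by (unfold P, P', Q, Q'; clear; field).
  set (R := P*Q) in *. set (R' := P'*Q') in *.
  assert (RR : R * R' = 1).
  { unfold R, R'. transitivity ((P*P')*(Q*Q')). clear; field. rewrite PP, QQ; clear; field. }
  assert (Rb : c/2 <= R).
  { assert (k*k <= (2*P)*(2*Q)) by (apply Rmult_le_compat; lra). unfold R; nra. }
  assert (Rp : 0 < R) by lra.
  assert (R'b : 2 * R' * c <= 4).
  { assert (0 < R') by nra. nra. }
  assert (0 <= (R - c/2) * (c - 2*R')) by (apply Rmult_le_pos; nra).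
  assert (c * ((R + R')/2) >= c * (c/4 + /c)).
  { replace (c * (c/4 + /c)) with (c*c/4 + 1) by (field; lra). nra. }
  assert (c/4 + /c <= (R+R')/2) by (apply Rmult_le_reg_l with c; lra).
  lra.
Qed.

Lemma arcosh_mono a b : 1 <= a -> a <= b -> arcosh a <= arcosh b.
Proof.
  intros Ha Hab. unfold arcosh.
  assert (sqrt (a*a-1) <= sqrt (b*b-1)) by (apply sqrt_le_1_alt; nra).
  pose proof (sqrt_pos (a*a-1)).
  destruct (Req_dec (a + sqrt (a*a-1)) (b + sqrt (b*b-1))) as [E|N].
  rewrite E; lra. left. apply ln_increasing; lra.
Qed.

Lemma arcosh_quarter c : 0 < c -> arcosh (c/4 + /c) = ln (c/4 + /c + Rabs (c/4 - /c)).
Proof.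
  intro Hc. unfold arcosh. f_equal. f_equal.
  replace ((c / 4 + / c) * (c / 4 + / c) - 1) with (Rsqr (c/4 - /c)) by (unfold Rsqr; field; lra).
  apply sqrt_Rsqr_abs.
Qed.

Lemma arcosh_big c : 2 < c -> arcosh (c/4 + /c) = ln (c/2).
Proof.
  intro Hc. rewrite arcosh_quarter by lra. f_equal.
  rewrite Rabs_right. field. lra.
  assert (/c < c/4).
  { apply (Rmult_lt_reg_l c); [lra|]. rewrite Rinv_r by lra. nra. }
  lra.
Qed.

Lemma arcosh_small c : 0 < c -> c <= 2 -> arcosh (c/4 + /c) = - ln (c/2).
Proof.
  intros Hc Hc2. rewrite arcosh_quarter by lra.
  rewrite Rabs_left1.
  - replace (c / 4 + / c + - (c / 4 - / c)) with (/ (c/2)) by (field; lra).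
    apply ln_Rinv. lra.
  - assert (c/4 <= /c).
    { apply (Rmult_le_reg_l c); [lra|]. rewrite Rinv_r by lra. nra. }
    lra.
Qed.

Lemma glen_m1 u v : gvertex (-1) u -> gvertex (-1) v -> mink u v < -1 ->
  glen (-1) u (-1) v (arcosh (- mink u v)).
Proof.
  simpl. intros [Hu Pu] [Hv Pv] Hm.
  set (m := mink u v) in *.
  set (S := sqrt (m*m-1)).
  assert (SS : S*S = m*m-1) by (apply sqrt_sqrt; nra).
  assert (Sp : 0 < S) by (apply sqrt_lt_R0; nra).
  set (b := /S).
  assert (bp : 0 < b) by (apply Rinv_0_lt_compat; lra).
  assert (Hb : b*b*(m*m-1) = 1) by (unfold b; rewrite <- SS; field; lra).
  assert (Hvu : mink v u = m) by (unfold m; apply mink_sym).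
  left. split.
  - intros x [[Hx Hxu] [_ Hxv]].
    pose proof (half_ineq u v x x Hu Hv Pu Pv Hm Hx Hx Hxu Hxv). destruct Hx as [Hx _]. fold m in H. lra.
  - split.
    + intros d [x [y [[Hx Hxu] [[Hy Hyv] ->]]]].
      unfold hdist. apply arcosh_mono. lra.
      apply half_ineq; auto.
    + intros m' H. apply H.
      set (p := lin b v (-b*m) u). set (q := lin b u (-b*m) v).
      exists p, q.
      assert (Hpp : mink p p = -1).
      { unfold p; rewrite mink_linl, !mink_linr, Hu, Hv, Hvu; fold m. nra. }
      assert (Hqq : mink q q = -1).
      { unfold q; rewrite mink_linl, !mink_linr, Hu, Hv, Hvu; fold m. nra. }
      assert (Hpq : mink p q = m).
      { unfold p, q; rewrite mink_linl, !mink_linr, Hu, Hv, Hvu; fold m. nra. }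
      split; [split; [split; [auto|]|]|split; [split; [split; [auto|]|]|]].
      * unfold p; rewrite c3_lin. assert (0 < -b*m) by nra. apply Rplus_lt_0_compat; apply Rmult_lt_0_compat; lra.
      * unfold p; rewrite mink_linl, Hu, Hvu. nra.
      * unfold q; rewrite c3_lin. assert (0 < -b*m) by nra. apply Rplus_lt_0_compat; apply Rmult_lt_0_compat; lra.
      * unfold q; rewrite mink_linl, Hv; fold m. nra.
      * unfold hdist. rewrite Hpq. reflexivity.
Qed.

Lemma glen_0 u v : gvertex 0 u -> gvertex 0 v -> mink u v < 0 ->
  glen 0 u 0 v (ln (- mink u v / 2)).
Proof.
  simpl. intros [Hu Pu] [Hv Pv] Hm.
  set (c := - mink u v) in *.
  assert (Hc : 0 < c) by (unfold c; lra).
  assert (Hvu : mink v u = - c) by (unfold c; rewrite mink_sym; ring).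
  assert (Huv : mink u v = - c) by (unfold c; ring).
  set (p := lin (1/2) u (/c) v). set (q := lin (/c) u (1/2) v).
  assert (ic : 0 < /c) by (apply Rinv_0_lt_compat; lra).
  assert (Hpp : H2 p).
  { split. unfold p; rewrite mink_linl, !mink_linr, Hu, Hv, Hvu, Huv. field. lra.
    unfold p; rewrite c3_lin. nra. }
  assert (Hqq : H2 q).
  { split. unfold q; rewrite mink_linl, !mink_linr, Hu, Hv, Hvu, Huv. field. lra.
    unfold q; rewrite c3_lin. nra. }
  assert (Hpu : - mink p u = 1).
  { unfold p; rewrite mink_linl, Hu, Hvu. field. lra. }
  assert (Hqv : - mink q v = 1).
  { unfold q; rewrite mink_linl, Hv, Huv. field. lra. }
  assert (Hpv : - mink p v = c/2).
  { unfold p; rewrite mink_linl, Hv, Huv. field. lra. }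
  assert (Hpq : - mink p q = c/4 + /c).
  { unfold p, q; rewrite mink_linl, !mink_linr, Hu, Hv, Hvu, Huv. field. lra. }
  destruct (Rlt_or_le 2 c) as [Big|Small].
  - left. split.
    + intros x [[Hx Hxu] [_ Hxv]].
      pose proof (horo_ineq u v x x Hu Hv Pu Pv Big Hx Hx Hxu Hxv). fold c in H.
      destruct Hx as [Hx _]. rewrite Hx in H.
      assert (c * (c/4 + /c) <= c * 1) by (apply Rmult_le_compat_l; lra).
      replace (c * (c/4 + /c)) with (c*c/4 + 1) in H0 by (field; lra). nra.
    + assert (L1 : 1 <= c/4 + /c).
      { apply (Rmult_le_reg_l c); [lra|]. replace (c * (c/4 + /c)) with (c*c/4 + 1) by (field; lra). nra. }
      split.
      * intros d [x [y [[Hx Hxu] [[Hy Hyv] ->]]]].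
        rewrite <- arcosh_big by lra.
        unfold hdist. apply arcosh_mono. lra.
        apply horo_ineq; auto.
      * intros m' H. rewrite <- arcosh_big by lra. rewrite <- Hpq. apply H.
        exists p, q. repeat split; try apply Hpp; try apply Hqq; lra.
  - right. split.
    + exists p. repeat split; try apply Hpp; lra.
    + exists p, q. split; [split; [exact Hpp | lra]|].
      split; [split; [exact Hpp | exists (1/2), (/c); reflexivity]|].
      split; [split; [exact Hqq | lra]|].
      split; [split; [exact Hqq | exists (/c), (1/2); reflexivity]|].
      unfold hdist. rewrite Hpq. rewrite arcosh_small by lra. ring.
Qed.

Lemma lin_comm a u b v : lin a u b v = lin b v a u.
Proof. unfold lin; f_equal; ring. Qed.

Lemma side_sym t1 v1 t2 v2 : side_ok t1 v1 t2 v2 -> side_ok t2 v2 t1 v1.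
Proof.
  intros [a [b [Ha [Hb [H [C1 C2]]]]]]. exists b, a. rewrite (lin_comm b v2 a v1). tauto.
Qed.

Lemma gtri_swap e d v1 v2 v3 : gtri e e d v1 v2 v3 -> gtri e e d v2 v1 v3.
Proof.
  intros [G1 [G2 [G3 [D [S12 [S23 S31]]]]]].
  repeat split; auto.
  - intro E; apply D. replace (det3 v1 v2 v3) with (- det3 v2 v1 v3) by (unfold det3; ring). rewrite E; ring.
  - apply side_sym; auto.
  - apply side_sym; auto.
  - apply side_sym; auto.
Qed.

Lemma setdist_sym A B d : setdist A B d -> setdist B A d.
Proof.
  unfold setdist, is_inf. intros [H1 H2]. split.
  - intros t [x [y [Bx [Ay ->]]]]. apply H1. exists y, x. repeat split; auto.
    unfold hdist. rewrite mink_sym. reflexivity.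
  - intros m' Hm. apply H2. intros t [x [y [Ax [By ->]]]]. apply Hm. exists y, x. repeat split; auto.
    unfold hdist. rewrite mink_sym. reflexivity.
Qed.

Lemma gangle_swap d w u v th : gvertex d w -> gangle d w u v th -> gangle d w v u th.
Proof.
  destruct d; simpl.
  - intros [Hw Pw] [p [q [T [s [Bp [Gp [Bq [Gq [HTT [HTp [HTw [Hq Hth]]]]]]]]]]]].
    exists q, p, (lin (-1) T (-s) w), s.
    destruct Bp as [Hp Bp]. destruct Bq as [Hq' Bq].
    assert (HTq : mink T q = s).
    { rewrite Hq, !mink_linr, HTp, HTT, HTw. ring. }
    assert (Hwq : mink w q = mink w p).
    { rewrite Hq, !mink_linr, Hw, (mink_sym w T), HTw. ring. }
    split; [split; [exact Hq' | exact Bq] |]. split; [exact Gq|].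
    split; [split; [exact Hp|exact Bp]|]. split;[exact Gp|].
    split; [|split; [|split; [|split; [|exact Hth]]]].
    + rewrite mink_linl, !mink_linr, HTT, HTw, (mink_sym w T), HTw, Hw. ring.
    + rewrite mink_linl, HTq, Hwq, (mink_sym w p). replace (mink p w) with (-1) by lra. ring.
    + rewrite mink_linl, HTw, Hw. ring.
    + rewrite Hq. destruct p as [p1 p2 p3], T as [t1 t2 t3], w as [w1 w2 w3]. unfold lin; simpl. f_equal. all: field.
  - cbv zeta. intros _ [H1 H2]. split; [exact H1|]. rewrite H2. f_equal.
    apply mink_sym. apply Rmult_comm.
  - intros _; apply setdist_sym.
Qed.

Lemma side0 u v : gvertex 0 u -> gvertex 0 v -> side_ok 0 u 0 v -> mink u v < 0.
Proof.
  simpl. intros [Hu _] [Hv _] [a [b [Ha [Hb [[Hx _] _]]]]].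
  rewrite mink_linl, !mink_linr, Hu, Hv, (mink_sym v u) in Hx.
  destruct (Rlt_or_le (mink u v) 0); auto.
  assert (0 <= a*b*mink u v) by (apply Rmult_le_pos; [apply Rmult_le_pos|]; lra). nra.
Qed.

Lemma sidem1 u v : gvertex (-1) u -> gvertex (-1) v -> side_ok (-1) u (-1) v -> mink u v < -1.
Proof.
  simpl. intros [Hu _] [Hv _] [a [b [Ha [Hb [[Hx _] [C1 C2]]]]]].
  apply Rnot_le_lt in C1. apply Rnot_le_lt in C2.
  rewrite mink_linl, Hu, (mink_sym v u) in C1.
  rewrite mink_linl, Hv in C2.
  rewrite mink_linl, !mink_linr, Hu, Hv, (mink_sym v u) in Hx. nra.
Qed.

Lemma side0_mk u v : gvertex 0 u -> gvertex 0 v -> mink u v < 0 -> side_ok 0 u 0 v.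
Proof.
  simpl. intros [Hu Pu] [Hv Pv] Hm.
  set (k := sqrt (-2 * mink u v)).
  assert (K : k*k = -2 * mink u v) by (apply sqrt_sqrt; lra).
  assert (kp : 0 < k) by (apply sqrt_lt_R0; lra).
  assert (ik : 0 < /k) by (apply Rinv_0_lt_compat; lra).
  exists (/k), (/k). repeat split; try lra.
  - rewrite mink_linl, !mink_linr, Hu, Hv, (mink_sym v u).
    replace (/ k * (/ k * 0 + / k * mink u v) + / k * (/ k * mink u v + / k * 0)) with (2 * mink u v / (k*k)) by (field; lra).
    rewrite K. field. lra.
  - rewrite c3_lin. nra.
  - intro C; exact C.
  - intro C; exact C.
Qed.

Lemma sidem1_mk u v : gvertex (-1) u -> gvertex (-1) v -> mink u v < -1 -> side_ok (-1) u (-1) v.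
Proof.
  simpl. intros [Hu Pu] [Hv Pv] Hm.
  set (k := sqrt (-2 -2 * mink u v)).
  assert (K : k*k = -2 -2 * mink u v) by (apply sqrt_sqrt; lra).
  assert (kp : 0 < k) by (apply sqrt_lt_R0; lra).
  assert (ik : 0 < /k) by (apply Rinv_0_lt_compat; lra).
  exists (/k), (/k). repeat split; try lra.
  - rewrite mink_linl, !mink_linr, Hu, Hv, (mink_sym v u).
    replace (/ k * (/ k * 1 + / k * mink u v) + / k * (/ k * mink u v + / k * 1)) with ((2 + 2 * mink u v) / (k*k)) by (field; lra).
    rewrite K. field. lra.
  - rewrite c3_lin. nra.
  - intro C. simpl in C. rewrite mink_linl, Hu, (mink_sym v u) in C. nra.
  - intro C. simpl in C. rewrite mink_linl, Hv in C. nra.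
Qed.

Definition lfun (eps : Z) (u v : V3) : R :=
  match eps with Z0 => ln (- mink u v / 2) | _ => arcosh (- mink u v) end.

Lemma lfun_sym eps u v : lfun eps u v = lfun eps v u.
Proof. unfold lfun. rewrite mink_sym. reflexivity. Qed.

Lemma Lglen eps u v : (eps = 0%Z \/ eps = (-1)%Z) -> gvertex eps u -> gvertex eps v ->
  side_ok eps u eps v -> glen eps u eps v (lfun eps u v).
Proof.
  intros [->| ->] Gu Gv S.
  - apply glen_0; auto. apply side0; auto.
  - apply glen_m1; auto. apply sidem1; auto.
Qed.

Lemma arcosh_pos z : 1 < z -> 0 < arcosh z.
Proof.
  intro Hz. unfold arcosh. rewrite <- ln_1. apply ln_increasing. lra.
  pose proof (sqrt_pos (z*z-1)). lra.
Qed.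

Lemma lfun_pos u v : gvertex (-1) u -> gvertex (-1) v -> side_ok (-1) u (-1) v -> 0 < lfun (-1) u v.
Proof.
  intros Gu Gv S. pose proof (sidem1 u v Gu Gv S). unfold lfun. apply arcosh_pos. lra.
Qed.

Lemma construct0 (l1 l2 l3 : R) : exists w1 w2 w3, gtri 0 0 0 w1 w2 w3 /\
  glen 0 w2 0 w3 l1 /\ glen 0 w3 0 w1 l2 /\ glen 0 w1 0 w2 l3.
Proof.
  set (a := exp ((l2+l3-l1)/2)). set (b := exp ((l1+l3-l2)/2)). set (c := exp ((l1+l2-l3)/2)).
  assert (ap : 0 < a) by apply exp_pos. assert (bp : 0 < b) by apply exp_pos. assert (cp : 0 < c) by apply exp_pos.
  assert (bc : b*c = exp l1) by (unfold b, c; rewrite <- exp_plus; f_equal; field).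
  assert (ca : c*a = exp l2) by (unfold a, c; rewrite <- exp_plus; f_equal; field).
  assert (ab : a*b = exp l3) by (unfold a, b; rewrite <- exp_plus; f_equal; field).
  set (w1 := mkV a 0 a). set (w2 := mkV (-b) 0 b). set (w3 := mkV 0 (2*c) (2*c)).
  assert (G1 : gvertex 0 w1) by (simpl; unfold mink; simpl; split; [ring|lra]).
  assert (G2 : gvertex 0 w2) by (simpl; unfold mink; simpl; split; [ring|lra]).
  assert (G3 : gvertex 0 w3) by (simpl; unfold mink; simpl; split; [ring|lra]).
  assert (M23 : mink w2 w3 = -2*(b*c)) by (unfold mink; simpl; ring).
  assert (M31 : mink w3 w1 = -2*(c*a)) by (unfold mink; simpl; ring).
  assert (M12 : mink w1 w2 = -2*(a*b)) by (unfold mink; simpl; ring).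
  assert (S23 : side_ok 0 w2 0 w3) by (apply side0_mk; auto; rewrite M23; nra).
  assert (S31 : side_ok 0 w3 0 w1) by (apply side0_mk; auto; rewrite M31; nra).
  assert (S12 : side_ok 0 w1 0 w2) by (apply side0_mk; auto; rewrite M12; nra).
  exists w1, w2, w3. split.
  - repeat split; try apply G1; try apply G2; try apply G3; auto.
    unfold det3; simpl. intro E.
    assert (a*b*c = 0) by lra.
    assert (0 < a*b*c) by (repeat apply Rmult_lt_0_compat; auto). lra.
  - split; [|split].
    + replace l1 with (lfun 0 w2 w3). apply Lglen; auto.
      unfold lfun. rewrite M23, bc. replace (- (-2 * exp l1) / 2) with (exp l1) by field. apply ln_exp.
    + replace l2 with (lfun 0 w3 w1). apply Lglen; auto.
      unfold lfun. rewrite M31, ca. replace (- (-2 * exp l2) / 2) with (exp l2) by field. apply ln_exp.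
    + replace l3 with (lfun 0 w1 w2). apply Lglen; auto.
      unfold lfun. rewrite M12, ab. replace (- (-2 * exp l3) / 2) with (exp l3) by field. apply ln_exp.
Qed.

Definition ch x := (exp x + exp (-x))/2.
Definition sh x := (exp x - exp (-x))/2.

Lemma exp_inv x : exp x * exp (-x) = 1.
Proof. rewrite <- exp_plus. replace (x + -x) with 0 by ring. apply exp_0. Qed.

Lemma chsh x : ch x * ch x - sh x * sh x = 1.
Proof. unfold ch, sh. pose proof (exp_inv x). nra. Qed.

Lemma sh_pos x : 0 < x -> 0 < sh x.
Proof. intro. unfold sh. assert (exp (-x) < exp x) by (apply exp_increasing; lra). lra. Qed.

Lemma ch_pos x : 0 < ch x.
Proof. unfold ch. pose proof (exp_pos x). pose proof (exp_pos (-x)). lra. Qed.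

Lemma ch_gt1 x : 0 < x -> 1 < ch x.
Proof. intro. pose proof (chsh x). pose proof (sh_pos x H). pose proof (ch_pos x). nra. Qed.

Lemma arcosh_ch l : 0 < l -> arcosh (ch l) = l.
Proof.
  intro Hl. unfold arcosh.
  replace (ch l * ch l - 1) with (Rsqr (sh l)) by (unfold Rsqr; pose proof (chsh l); lra).
  rewrite sqrt_Rsqr by (pose proof (sh_pos l Hl); lra).
  replace (ch l + sh l) with (exp l) by (unfold ch, sh; field).
  apply ln_exp.
Qed.

Lemma ch_double s : ch s * ch s + sh s * sh s = ch (s + s).
Proof.
  unfold ch, sh. rewrite exp_plus. replace (- (s+s)) with (-s + -s) by ring. rewrite exp_plus.
  pose proof (exp_inv s). nra.
Qed.

Lemma constructm1 (l1 l2 l3 : R) : 0 < l1 -> 0 < l2 -> 0 < l3 -> exists w1 w2 w3, gtri (-1) (-1) (-1) w1 w2 w3 /\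
  glen (-1) w2 (-1) w3 l1 /\ glen (-1) w3 (-1) w1 l2 /\ glen (-1) w1 (-1) w2 l3.
Proof.
  intros H1 H2 H3.
  set (s := l3/2).
  assert (sp : 0 < s) by (unfold s; lra).
  set (C3 := ch s). set (S3 := sh s).
  assert (C3p : 0 < C3) by apply ch_pos. assert (S3p : 0 < S3) by (apply sh_pos; auto).
  assert (CS : C3*C3 - S3*S3 = 1) by apply chsh.
  assert (SC : S3 <= C3) by nra.
  set (B := ch l2). set (C := ch l1).
  assert (Bg : 1 < B) by (apply ch_gt1; auto). assert (Cg : 1 < C) by (apply ch_gt1; auto).
  set (z := (B + C)/(2*S3)). set (x := (C - B)/(2*C3)).
  assert (Ez : z * (2*S3) = B + C) by (unfold z; field; lra).
  assert (Ex : x * (2*C3) = C - B) by (unfold x; field; lra).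
  assert (zp : 0 < z) by nra.
  assert (xz : x*x <= z*z).
  { assert ((x*(2*C3))^2 <= (z*(2*C3))^2).
    { rewrite Ex. apply Rle_trans with ((z*(2*S3))^2). rewrite Ez. nra.
      apply pow_incr. nra. }
    nra. }
  set (y := sqrt (1 + z*z - x*x)).
  assert (Y : y*y = 1 + z*z - x*x) by (apply sqrt_sqrt; lra).
  assert (yp : 0 < y) by (apply sqrt_lt_R0; lra).
  set (w1 := mkV C3 0 S3). set (w2 := mkV (-C3) 0 S3). set (w3 := mkV x y z).
  assert (G1 : gvertex (-1) w1) by (simpl; unfold mink; simpl; split; lra).
  assert (G2 : gvertex (-1) w2) by (simpl; unfold mink; simpl; split; lra).
  assert (G3 : gvertex (-1) w3) by (simpl; unfold mink; simpl; split; lra).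
  assert (M23 : mink w2 w3 = - C) by (unfold mink; simpl; nra).
  assert (M31 : mink w3 w1 = - B) by (unfold mink; simpl; nra).
  assert (M12 : mink w1 w2 = - ch l3).
  { unfold mink; simpl. replace l3 with (s + s) by (unfold s; field). rewrite <- ch_double. fold C3 S3. ring. }
  assert (g3 : 1 < ch l3) by (apply ch_gt1; auto).
  assert (S23 : side_ok (-1) w2 (-1) w3) by (apply sidem1_mk; auto; rewrite M23; lra).
  assert (S31 : side_ok (-1) w3 (-1) w1) by (apply sidem1_mk; auto; rewrite M31; lra).
  assert (S12 : side_ok (-1) w1 (-1) w2) by (apply sidem1_mk; auto; rewrite M12; lra).
  exists w1, w2, w3. split.
  - repeat split; try apply G1; try apply G2; try apply G3; auto.
    unfold det3; simpl. intro E.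
    assert (C3*S3*y = 0) by lra.
    assert (0 < C3*S3*y) by (apply Rmult_lt_0_compat; [apply Rmult_lt_0_compat|]; assumption). lra.
  - split; [|split].
    + replace l1 with (lfun (-1) w2 w3). apply Lglen; auto.
      unfold lfun. rewrite M23, Ropp_involutive. apply arcosh_ch; auto.
    + replace l2 with (lfun (-1) w3 w1). apply Lglen; auto.
      unfold lfun. rewrite M31, Ropp_involutive. apply arcosh_ch; auto.
    + replace l3 with (lfun (-1) w1 w2). apply Lglen; auto.
      unfold lfun. rewrite M12, Ropp_involutive. apply arcosh_ch; auto.
Qed.

Lemma real_D eps delta th a b l : J (eps*delta) a -> J (eps*delta) b ->
  realizes eps delta th a b l -> Dset eps delta th a b.
Proof.
  intros Ja Jb [v1 [v2 [v3 [G [A [B [T _]]]]]]].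
  split; [exact Ja|]. split; [exact Jb|]. exists v1, v2, v3. auto.
Qed.

Lemma D_real eps delta th a b : (eps = 0%Z \/ eps = (-1)%Z) -> Dset eps delta th a b ->
  exists l, realizes eps delta th a b l /\ realizes eps delta th b a l /\ (eps = (-1)%Z -> 0 < l).
Proof.
  intros He [Ja [Jb [v1 [v2 [v3 [G [Ga [Gb T]]]]]]]].
  pose proof G as [G1 [G2 [G3 [_ [S12 _]]]]].
  exists (lfun eps v1 v2). split; [|split].
  - exists v1, v2, v3. split; [exact G|]. split; [exact Ga|]. split; [exact Gb|]. split; [exact T|]. apply Lglen; auto.
  - exists v2, v1, v3. split; [apply gtri_swap; auto|].
    split; [auto|]. split; [auto|]. split; [apply gangle_swap; auto|].
    rewrite lfun_sym. apply Lglen; auto. apply side_sym; auto.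
  - intros ->. apply lfun_pos; auto.
Qed.

Theorem lemma4p1 (eps delta : Z) (phi1 phi2 phi3 : R) :
  (eps = 0%Z \/ eps = (-1)%Z) ->
  (delta = (-1)%Z \/ delta = 0%Z \/ delta = 1%Z) ->
  Iint delta phi1 -> Iint delta phi2 -> Iint delta phi3 ->
  forall r1 r2 r3 : R,
    Mset eps delta phi1 phi2 phi3 r1 r2 r3 <->
    (J (eps * delta) r1 /\ J (eps * delta) r2 /\ J (eps * delta) r3 /\
     Dset eps delta phi1 r2 r3 /\ Dset eps delta phi1 r3 r2 /\
     Dset eps delta phi2 r3 r1 /\ Dset eps delta phi2 r1 r3 /\
     Dset eps delta phi3 r1 r2 /\ Dset eps delta phi3 r2 r1).
Proof.
  intros He _ _ _ _ r1 r2 r3. split.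
  - intros [J1 [J2 [J3 [l1 [l2 [l3 [R1 [R1' [R2 [R2' [R3 [R3' _]]]]]]]]]]]].
    repeat split; auto; eapply real_D; eauto.
  - intros [J1 [J2 [J3 [D1 [_ [D2 [_ [D3 _]]]]]]]].
    destruct (D_real _ _ _ _ _ He D1) as [l1 [R1 [R1' P1]]].
    destruct (D_real _ _ _ _ _ He D2) as [l2 [R2 [R2' P2]]].
    destruct (D_real _ _ _ _ _ He D3) as [l3 [R3 [R3' P3]]].
    split; [auto|]. split; [auto|]. split; [auto|].
    exists l1, l2, l3. repeat (split; [assumption|]).
    destruct He as [-> | ->].
    + apply construct0.
    + apply constructm1; auto.
Qed.
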